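(* Let $G=(V,E)$ be a graph with a string representation $\varphi$ in the plane, let $D\subseteq V$, and let $R\subseteq\mathbb{R}^2$ be a region. If $\pi$ is a shortest curve relative to $D$ and $\pi'\subseteq R$ is a sub-curve of $\pi$, then $\pi'$ is a shortest curve relative to $D\cap V|_R$ in $G|_R$ with representation $\varphi|_R$.
   Context: A string representation assigns to each vertex $v$ a bounded curve $\varphi(v)\subseteq\mathbb{R}^2$ with distinct $u,v$ adjacent iff the curves intersect; representations are assumed to have finitely many intersection points, no touching, no triple points, no self-intersections. Faces of the representation are the arc-connected components of the complement of all strings; a region is the closure of a union of some faces. For a closed region $R$, $G|_R=(V|_R,E|_R)$ is the intersection graph of the arc-connected components of the sets $\varphi(v)\cap R$ (each such component is a new vertex, a split of $v$), with representation $\varphi|_R$ given by these components. A path $P$ is a shortest path relative to $D$ if it is shortest in $G[P\cup D]$. For such $P$ from $u$ to $v$ and points $A\in\varphi(u)$, $B\in\varphi(v)$, a curve $\pi\subseteq\bigcup_{p\in P}\varphi(p)$ from $A$ to $B$ whose intersection with each $\varphi(p)$ is connected, these intersections occurring along $\pi$ in the order of $P$, is a shortest curve of $P$ relative to $D$; a shortest curve relative to $D$ is one for some shortest path relative to $D$. *)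

(* Defs.v *)
From HB Require Import structures.
From mathcomp Require Import all_boot all_order all_algebra.
From mathcomp Require Import all_classical all_reals all_analysis.
From Stdlib Require Lists.List.
Set Implicit Arguments. Unset Strict Implicit. Unset Printing Implicit Defensive.
Import Order.TTheory GRing.Theory Num.Theory.
Import numFieldNormedType.Exports.
Local Open Scope classical_set_scope.
Local Open Scope ring_scope.

Section StringDefs.
Variable R : realType.
Local Notation P := (R * R)%type.

Definition I01 : set R := [set s | 0 <= s <= 1].

Definition arc_param (g : R -> P) : Prop :=
  {within I01, continuous g} /\
  (forall s t, I01 s -> I01 t -> g s = g t -> s = t).

Definition is_arc (S : set P) : Prop :=
  exists g, arc_param g /\ S = g @` I01.

Definition arc_between (A : set P) (x y : P) : Prop :=
  exists g, arc_param g /\ g 0 = x /\ g 1 = y /\ g @` I01 `<=` A.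

Definition arc_rel (A : set P) (x y : P) : Prop :=
  A x /\ A y /\ (x = y \/ arc_between A x y).

Definition arc_component (A : set P) (C : set P) : Prop :=
  exists x, A x /\ C = [set y | arc_rel A x y].

(* S1 and S2 cross (transversally, no touching) at x: locally homeomorphic to
   the two coordinate axes crossing at the origin *)
Definition crossing (S1 S2 : set P) (x : P) : Prop :=
  exists (U : set P) (h k : P -> P),
    open U /\ U x /\ open (h @` U) /\
    {within U, continuous h} /\ {within h @` U, continuous k} /\
    (forall y, U y -> k (h y) = y) /\ h x = (0, 0) /\
    h @` (U `&` S1) = h @` U `&` [set q | q.2 = 0] /\
    h @` (U `&` S2) = h @` U `&` [set q | q.1 = 0].

Definition string_rep (V : finType) (phi : V -> set P) : Prop :=
  (forall v, is_arc (phi v)) /\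
  (forall u v, u != v -> finite_set (phi u `&` phi v)) /\
  (forall u v w, u != v -> v != w -> u != w -> phi u `&` phi v `&` phi w = set0) /\
  (forall u v x, u != v -> phi u x -> phi v x -> crossing (phi u) (phi v) x).

Section Graph.
Variable I : Type.
Variable phi : I -> set P.

Definition adj (u v : I) : Prop := u <> v /\ exists x, phi u x /\ phi v x.

Fixpoint adj_chain (p : seq I) : Prop :=
  match p with
  | x :: ((y :: _) as q) => adj x y /\ adj_chain q
  | _ => True
  end.

Definition walk (S : set I) (u v : I) (p : seq I) : Prop :=
  exists p', p = u :: p' /\ last u p' = v /\ adj_chain p /\
    (forall x, Stdlib.Lists.List.In x p -> S x).

Definition gpath (u v : I) (p : seq I) : Prop :=
  walk setT u v p /\ Stdlib.Lists.List.NoDup p.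

(* p is a shortest u-v path relative to D: shortest in G[p ∪ D] *)
Definition shortest_rel (D : set I) (u v : I) (p : seq I) : Prop :=
  gpath u v p /\
  forall q, walk [set x | Stdlib.Lists.List.In x p \/ D x] u v q -> (size p <= size q)%N.

Definition curve_of (u : I) (p : seq I) (g : R -> P) : Prop :=
  arc_param g /\
  (forall s, I01 s -> exists x, Stdlib.Lists.List.In x p /\ phi x (g s)) /\
  (forall x, Stdlib.Lists.List.In x p -> connected (g @` I01 `&` phi x)) /\
  (forall i j s t, (i < j)%N -> (j < size p)%N -> I01 s -> I01 t ->
     phi (nth u p i) (g s) -> phi (nth u p j) (g t) -> s <= t).

Definition shortest_curve (D : set I) (pi : set P) : Prop :=
  exists (u v : I) (p : seq I) (g : R -> P),
    shortest_rel D u v p /\ curve_of u p g /\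
    phi u (g 0) /\ phi v (g 1) /\ pi = g @` I01.
End Graph.

Definition sub_curve (pi' pi : set P) : Prop :=
  exists g, arc_param g /\ pi = g @` I01 /\
    exists a b, 0 <= a /\ a < b /\ b <= 1 /\ pi' = g @` [set s | a <= s <= b].

Definition is_face (V : finType) (phi : V -> set P) (F : set P) : Prop :=
  arc_component (~` [set x | exists v, phi v x]) F.

Definition is_region (V : finType) (phi : V -> set P) (Rg : set P) : Prop :=
  exists Fs : set (set P), (forall F, Fs F -> is_face phi F) /\
    Rg = closure (\bigcup_(F in Fs) F).

(* restriction G|_R: vertices are splits (v, C), C an arc-component of phi v ∩ R *)
Definition split_vertex (V : finType) (phi : V -> set P) (Rg : set P) : Type :=
  {vc : V * set P | arc_component (phi vc.1 `&` Rg) vc.2}.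

Definition restr_rep (V : finType) (phi : V -> set P) (Rg : set P)
  : split_vertex phi Rg -> set P := fun s => (sval s).2.

(* D ∩ V|_R : the splits of vertices of D *)
Definition restr_set (V : finType) (phi : V -> set P) (Rg : set P) (D : set V)
  : set (split_vertex phi Rg) := fun s => D (sval s).1.

End StringDefs.

Arguments restr_rep {R V} phi Rg _.
Arguments restr_set {R V} phi Rg D _.

(* Main.v *)
Require Import Defs.
From HB Require Import structures.
From mathcomp Require Import all_boot all_order all_algebra.
From mathcomp Require Import all_classical all_reals all_analysis.
From mathcomp Require Import lra zify.
Import Order.TTheory GRing.Theory Num.Theory.
Import numFieldNormedType.Exports.
Local Open Scope classical_set_scope.
Local Open Scope ring_scope.

Section S.
Context {R : realType}.
Local Notation P := (R * R)%type.


Lemma within_comp (A B : set R) (f : R -> R) (g : R -> P) :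
  continuous f -> (forall x, B x -> A (f x)) -> {within A, continuous g} ->
  {within B, continuous (g \o f)}.
Proof.
move=> cf fB cg; apply/subspace_continuousP => x Bx.
have gA := (subspace_continuousP A g).1 cg (f x) (fB x Bx).
apply: cvg_comp gA => W /= HW.
rewrite /within /= in HW *.
have := cf x _ HW; rewrite /= nbhs_simpl.
move=> H; rewrite nbhs_simpl /=.
apply: (@filterS _ (nbhs x) _ (fun t => A (f t) -> W (f t))) H.
by move=> y H By; apply: H; apply: fB.
Qed.

Lemma closed_pre (B : set R) (g : R -> P) (K : set P) :
  closed B -> {within B, continuous g} -> closed K -> closed (B `&` g @^-1` K).
Proof.
move=> cB cg cK.
have : closed (g @^-1` K : set (subspace B)).
  by apply: preimage_closed => // x _; apply: cg.
case/closed_subspaceP => W cW e.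
have -> : B `&` g @^-1` K = W `&` B by rewrite e setIC.
exact: closedI.
Qed.

Lemma img_closed (B : set R) (g : R -> P) :
  compact B -> {within B, continuous g} -> closed (g @` B).
Proof.
move=> cB cg; apply: compact_closed; first exact: norm_hausdorff.
exact: continuous_compact.
Qed.

Definition seg (a b : R) : set R := [set s | a <= s <= b].

Lemma segE a b : seg a b = `[a, b]%classic.
Proof. by apply/seteqP; split => x; rewrite /seg /= in_itv. Qed.

Lemma seg_compact a b : compact (seg a b).
Proof. rewrite segE; exact: segment_compact. Qed.

Lemma seg_closed a b : closed (seg a b).
Proof. apply: compact_closed; [exact: Rhausdorff|exact: seg_compact]. Qed.

Lemma seg_connected a b : connected (seg a b).
Proof. rewrite segE; exact: segment_connected. Qed.

Lemma closed_sup_in (A : set R) : closed A -> A !=set0 -> has_ubound A -> A (sup A).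
Proof. by move=> cA A0 ub; have := closure_sup A0 ub; rewrite -(closure_id A).1. Qed.

Lemma closed_min (A : set R) : closed A -> A !=set0 -> has_lbound A ->
  exists m, A m /\ forall x, A x -> m <= x.
Proof.
move=> cA [x0 Ax0] [l Hl].
pose B := [set y : R | A (- y)].
have cB : closed B.
  by apply: (@preimage_closed _ _ (fun y : R => - y)) => // y _; apply: oppr_continuous.
have hB : B (sup B).
  apply: closed_sup_in => //; first by exists (- x0); rewrite /B /= opprK.
  by exists (- l) => y By; rewrite lerNr; apply: Hl.
exists (- sup B); split => // x Ax; rewrite lerNl.
apply: sup_upper_bound; last by rewrite /B /= opprK.
split; first by exists (- x0); rewrite /B /= opprK.
by exists (- l) => y By; rewrite lerNr; apply: Hl.
Qed.

Lemma closed_max (A : set R) : closed A -> A !=set0 -> has_ubound A ->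
  exists m, A m /\ forall x, A x -> x <= m.
Proof.
move=> cA A0 ub; exists (sup A); split; first exact: closed_sup_in.
by move=> x Ax; apply: sup_upper_bound.
Qed.


Definition aff (c d r : R) := c + r * (d - c).

Lemma aff_cont c d : continuous (aff c d).
Proof.
move=> x; rewrite /aff.
apply: cvgD; first exact: cvg_cst.
apply: cvgMl; exact: cvg_id.
Qed.

Lemma aff_between c d r : I01 r -> 
  (c <= d -> c <= aff c d r <= d) /\ (d <= c -> d <= aff c d r <= c).
Proof.
rewrite /I01 /aff /= => /andP[r0 r1]; split => cd; apply/andP; split; nra.
Qed.

Lemma aff_I01 c d r : I01 c -> I01 d -> I01 r -> I01 (aff c d r).
Proof.
move=> /andP[c0 c1] /andP[d0 d1] Ir; have [H1 H2] := aff_between c d r Ir.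
apply/andP; have [cd|dc] := leP c d.
  by have /andP[? ?] := H1 cd; split; lra.
by have /andP[? ?] := H2 (ltW dc); split; lra.
Qed.

Lemma aff_inj c d r s : c != d -> aff c d r = aff c d s -> r = s.
Proof.
rewrite /aff => cd /addrI /eqP; rewrite -subr_eq0 -mulrBl mulf_eq0 !subr_eq0.
by case/orP => /eqP // dc; rewrite dc eqxx in cd.
Qed.

Lemma arc_param_aff (g : R -> P) c d : arc_param g -> I01 c -> I01 d -> c != d ->
  arc_param (fun r => g (aff c d r)).
Proof.
move=> [cg ig] Ic Id cd; split.
  by have := @within_comp (@I01 R) (@I01 R) (aff c d) g (aff_cont c d) (fun r Ir => aff_I01 c d r Ic Id Ir) cg.
move=> s t Is It /ig; move=> /(_ (aff_I01 c d s Ic Id Is) (aff_I01 c d t Ic Id It)).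
exact: aff_inj.
Qed.

Lemma I01_seg : @I01 R = seg 0 1.
Proof. by []. Qed.

Lemma conv_pre (g0 g1 : R -> P) a b s t tau :
  arc_param g0 -> {within seg a b, continuous g1} ->
  g1 @` seg a b `<=` g0 @` @I01 R ->
  I01 s -> I01 t -> s <= tau <= t ->
  (g1 @` seg a b) (g0 s) -> (g1 @` seg a b) (g0 t) -> (g1 @` seg a b) (g0 tau).
Proof.
move=> [cg0 ig0] cg1 sub /andP[s0 s1] /andP[t0 t1] /andP[stau taut] Ys Yt.
apply: contrapT => NY.
have tau0 : 0 <= tau by apply: le_trans stau.
have tau1 : tau <= 1 by apply: le_trans t1.
pose K0 := g0 @` seg 0 tau; pose K1 := g0 @` seg tau 1.
have cK0 : closed K0.
  apply: img_closed; first exact: seg_compact.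
  apply: continuous_subspaceW cg0 => x /andP[x0 x1]; apply/andP; split => //.
  exact: le_trans tau1.
have cK1 : closed K1.
  apply: img_closed; first exact: seg_compact.
  apply: continuous_subspaceW cg0 => x /andP[x0 x1]; apply/andP; split => //.
  exact: le_trans x0.
pose A0 := seg a b `&` g1 @^-1` K0; pose A1 := seg a b `&` g1 @^-1` K1.
have cA0 : closed A0 by apply: closed_pre => //; exact: seg_closed.
have cA1 : closed A1 by apply: closed_pre => //; exact: seg_closed.
have cover : forall x, seg a b x -> A0 x \/ A1 x.
  move=> x Hx; have [w /andP[w0 w1] e] := sub _ (imageP _ Hx).
  have [wt|tw] := leP w tau.
    by left; split => //; exists w => //; apply/andP.
  by right; split => //; exists w => //; apply/andP; split => //; exact: ltW.
have disj : forall x, A0 x -> A1 x -> False.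
  move=> x [Hx [w0 /andP[w00 w01] e0]] [_ [w1 /andP[w10 w11] e1]].
  have ew : w0 = w1.
    apply: ig0; [apply/andP; split=> //; exact: le_trans tau1|
                 apply/andP; split=> //; exact: le_trans w10|by rewrite e0 e1].
  have ewt : w0 = tau by apply/eqP; rewrite eq_le w01 ew w10.
  by apply: NY; rewrite -ewt e0; exists x.
case: Ys => xs Hxs es; case: Yt => xt Hxt et.
have A0s : A0 xs by split => //; exists s => //; apply/andP.
have A1t : A1 xt by split => //; exists t => //; apply/andP.
have := seg_connected a b A0 (ex_intro _ xs A0s).
have e1 : A0 = seg a b `&` ~` A1.
  apply/seteqP; split => x.
    by move=> Hx; split; [case: Hx|move=> /(disj x Hx)].
  by move=> [Hx NA1]; case: (cover x Hx) => // /NA1.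
have e2 : A0 = seg a b `&` A0.
  by apply/seteqP; split => x; [move=> Hx; split => //; case: Hx|case].
move=> /(_ (ex_intro2 _ _ _ (closed_openC cA1) e1) (ex_intro2 _ _ _ cA0 e2)) E.
by apply: (disj xt); [rewrite E; case: A1t|].
Qed.

Lemma aff0 c d : aff c d 0 = c.
Proof. by rewrite /aff mul0r addr0. Qed.

Lemma aff1 c d : aff c d 1 = d.
Proof. by rewrite /aff mul1r addrC subrK. Qed.

Lemma aff_mono c d s t : c < d -> aff c d s <= aff c d t -> s <= t.
Proof. rewrite /aff => cd H; nra. Qed.

Lemma aff_img (g : R -> P) c d : c < d -> (fun r => g (aff c d r)) @` (@I01 R) = g @` seg c d.
Proof.
move=> cd; apply/seteqP; split => y.
  case=> r Ir <-; exists (aff c d r) => //.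
  by have [H _] := aff_between c d r Ir; apply: H; apply: ltW.
case=> s /andP[cs sd] <-.
have dc0 : d - c != 0 by rewrite subr_eq0 gt_eqF.
exists ((s - c) / (d - c)).
  apply/andP; split.
    apply: divr_ge0; rewrite subr_ge0 //; exact: ltW.
  by rewrite ler_pdivrMr ?subr_gt0 // mul1r lerB.
by rewrite /aff mulrAC -mulrA mulfV // mulr1 addrC subrK.
Qed.

End S.

Set Implicit Arguments. Unset Strict Implicit.
Section Comb.

Lemma List_mapE (A B : Type) (f : A -> B) s : List.map f s = map f s.
Proof. by elim: s => //= x s ->. Qed.

Lemma In_mapP (A B : Type) (f : A -> B) s y : List.In y (map f s) <-> exists x, f x = y /\ List.In x s.
Proof. by rewrite -List_mapE; exact: List.in_map_iff. Qed.

Lemma In_map_in (A B : Type) (f : A -> B) s x : List.In x s -> List.In (f x) (map f s).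
Proof. by rewrite -List_mapE; exact: List.in_map. Qed.
Variable R : realType.
Local Notation P := (R * R)%type.

Lemma In_mem (T : eqType) (x : T) s : List.In x s <-> x \in s.
Proof.
elim: s => [|y s IH] //=; rewrite in_cons; split.
  by case=> [->|/IH ->]; rewrite ?eqxx ?orbT.
by case/orP => [/eqP ->|/IH]; [left|right].
Qed.

Lemma NoDup_uniq (T : eqType) (s : seq T) : List.NoDup s <-> uniq s.
Proof.
elim: s => [|x s IH] /=; first by split => // _; constructor.
split.
  move/List.NoDup_cons_iff => [nx /IH ->]; rewrite andbT.
  by apply/negP => /In_mem.
case/andP => nx /IH H; constructor => // /In_mem; exact/negP.
Qed.

Variable I : Type.
Variable phi : I -> set P.

Lemma sorted_last_max x s : path ltn x s -> forall y, y \in x :: s -> (y <= last x s)%N.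
Proof.
elim: s x => [|z s IH] x /=; first by move=> _ y; rewrite inE => /eqP ->.
move=> /andP[xz pz] y; rewrite inE => /orP[/eqP ->|ys].
  by apply: leq_trans (IH z pz z (mem_head _ _)); apply: ltnW.
exact: IH.
Qed.

Lemma sorted_head_min x s : path ltn x s -> forall y, y \in x :: s -> (x <= y)%N.
Proof.
move=> ps y; rewrite inE => /orP[/eqP ->//|ys].
by have /allP /(_ y ys) /ltnW := order_path_min ltn_trans ps.
Qed.

Lemma adj_chain_cons2 x y s : adj_chain phi [:: x, y & s] <-> adj phi x y /\ adj_chain phi (y :: s).
Proof. by []. Qed.


Lemma adj_chain_catP x s1 y s2 : adj_chain phi (x :: s1) -> adj_chain phi (y :: s2) ->
  adj phi (last x s1) y -> adj_chain phi (x :: s1 ++ y :: s2).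
Proof.
elim: s1 x => [|z s1 IH] x /=; first by move=> _ H2 H; split.
by move=> [axz H1] H2 H; split => //; apply: IH.
Qed.

Lemma adj_chain_nth x0 s i : adj_chain phi s -> (i.+1 < size s)%N ->
  adj phi (nth x0 s i) (nth x0 s i.+1).
Proof.
elim: s i => [|x s IH] i //=; case: s IH => [|y s] IH.
  by move=> _; rewrite /= ltnS ltn0.
case=> axy H; case: i => [|i] /= Hi; first done.
exact: (IH i H).
Qed.

Lemma adj_chain_take s i : adj_chain phi s -> adj_chain phi (take i s).
Proof.
elim: s i => [|x s IH] [|i] //=; case: s IH => [|y s] IH //=.
move=> [axy H]; case: i => [|i] //=; split => //.
exact: (IH i.+1 H).
Qed.

Lemma adj_chain_drop s i : adj_chain phi s -> adj_chain phi (drop i s).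
Proof.
elim: s i => [|x s IH] [|i] //=; case: s IH => [|y s] IH //=.
by case=> _ H; apply: IH.
Qed.

Fixpoint rchain (s : seq I) : Prop :=
  match s with
  | x :: ((y :: _) as q) => (adj phi x y \/ x = y) /\ rchain q
  | _ => True
  end.

Lemma rchain_walk (S : set I) x s : rchain (x :: s) ->
  (forall z, List.In z (x :: s) -> S z) ->
  exists t, walk phi S x (last x s) t /\ (size t <= size (x :: s))%N.
Proof.
elim: s x => [|y s IH] x /=.
  move=> _ HS; exists [:: x]; split => //; exists [::]; split => //.
move=> [[axy|<-] Hr] HS.
- have [t [[t' [-> [lt [ch Ht]]]] st]] := IH y Hr (fun z Hz => HS z (or_intror Hz)).
  exists [:: x, y & t']; split; last by rewrite /= ltnS.
  exists (y :: t'); split => //; split => //; split => //.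
  by move=> z /= [<-|Hz]; [apply: HS; left|apply: Ht].
- have [t [Hw st]] := IH x Hr (fun z Hz => HS z (or_intror Hz)).
  by exists t; split => //; apply: leqW.
Qed.

Lemma last_take_nth (x : I) s i : (i <= size s)%N -> last x (take i s) = nth x (x :: s) i.
Proof.
elim: s i x => [|y s IH] [|i] x //= Hi.
rewrite IH //; apply: set_nth_default => /=; by rewrite ltnS.
Qed.

Lemma last_drop_nth (x : I) s k : (k < size s)%N -> last (nth x s k) (drop k.+1 s) = last x s.
Proof.
elim: s k x => [|y s IH] k x //= Hk.
case: k Hk => [|k] Hk; first by rewrite drop0.
rewrite /= -(IH k y) //; congr last; exact: set_nth_default.
Qed.

Lemma In_take (z : I) i s : List.In z (take i s) -> List.In z s.
Proof. by rewrite -{2}(cat_take_drop i s) => H; apply: List.in_or_app; left. Qed.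

Lemma In_drop (z : I) i s : List.In z (drop i s) -> List.In z s.
Proof. by rewrite -{2}(cat_take_drop i s) => H; apply: List.in_or_app; right. Qed.

Lemma walk_cat (S : set I) x y s1 y' z s2 : walk phi S x y s1 -> walk phi S y' z s2 ->
  adj phi y y' -> walk phi S x z (s1 ++ s2).
Proof.
move=> [s1' [-> [<- [c1 H1]]]] [s2' [-> [<- [c2 H2]]]] a.
exists (s1' ++ y' :: s2'); split => //; split; first by rewrite last_cat.
split; first exact: adj_chain_catP.
move=> w Hw; case: (List.in_app_or (x :: s1') (y' :: s2') w Hw); [exact: H1|exact: H2].
Qed.

Lemma walk_take (S : set I) u v p i : walk phi S u v p -> (0 < i <= size p)%N ->
  walk phi S u (nth u p i.-1) (take i p).
Proof.
move=> [p' [-> [_ [c H]]]] /andP[i0 ip]; case: i i0 ip => [|i] // _ ip.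
exists (take i p'); split => //; split.
  by rewrite last_take_nth.
split; first by have := adj_chain_take i.+1 c.
by move=> w Hw; apply: H; apply: (@In_take w i.+1); exact: Hw.
Qed.

Lemma walk_drop (S : set I) u v p k : walk phi S u v p -> (k < size p)%N ->
  walk phi S (nth u p k) v (drop k p).
Proof.
move=> [p' [ep [lp [c H]]]] kp.
exists (drop k.+1 p); split; first exact: drop_nth.
split; first by rewrite last_drop_nth // ep /= lp.
split; first exact: adj_chain_drop.
by move=> w /In_drop /H.
Qed.

Lemma walk_splice (S : set I) u v p i k t : walk phi S u v p -> (i <= k)%N -> (k < size p)%N ->
  walk phi S (nth u p i) (nth u p k) t -> walk phi S u v (take i p ++ t ++ drop k.+1 p).
Proof.
move=> Hw ik kp Ht.
have Hmid : walk phi S (nth u p i) v (t ++ drop k.+1 p).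
  have [kp1|] := ltnP k.+1 (size p).
    apply: (walk_cat Ht (walk_drop Hw kp1)).
    by case: Hw => [p' [_ [_ [c _]]]]; apply: adj_chain_nth.
  move=> pk; have ek : k.+1 = size p by apply/eqP; rewrite eqn_leq kp pk.
  rewrite ek drop_size cats0.
  suff -> : v = nth u p k by [].
  case: Hw ek => [p' [-> [<- _]]] /= [->]; rewrite nth_last /=.
  by case: p'.
case: i ik Ht Hmid => [|i] ik Ht Hmid.
  by rewrite take0 /=; case: Hw Hmid => [p' [-> _]].
have ip' := leq_ltn_trans ik kp.
have ip : (0 < i.+1 <= size p)%N by apply/andP; split => //; apply: ltnW.
apply: (walk_cat (walk_take Hw ip) Hmid) => /=.
by case: Hw => [p' [_ [_ [c _]]]]; apply: adj_chain_nth.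
Qed.

Lemma chain_map (f : nat -> I) s : sorted ltn s ->
  (forall j j', j \in s -> j' \in s -> (j < j')%N ->
     (forall l, (j < l < j')%N -> l \notin s) -> adj phi (f j) (f j')) ->
  adj_chain phi (map f s).
Proof.
elim: s => [|x s IH] //=; case: s IH => [|y s] IH //= /andP[xy ps] H.
split.
  apply: (H x y) => //; rewrite ?inE ?eqxx ?orbT //.
  move=> l /andP[xl ly]; rewrite !inE; apply/negP => /or3P[/eqP|/eqP|].
  - by move=> exl; rewrite exl ltnn in xl.
  - by move=> eyl; rewrite eyl ltnn in ly.
  move=> ls; have := order_path_min ltn_trans ps.
  by move/allP => /(_ l ls) yl; rewrite ltnNge ltnW in ly.
apply: IH => // j j' js j's jj' Hl.
apply: (H j j'); [by rewrite inE js orbT|by rewrite inE j's orbT|done|].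
move=> l Hjl; rewrite inE negb_or Hl // andbT.
apply/eqP => exl; move: js; rewrite inE => /orP[/eqP ej|js].
  by move: Hjl; rewrite ej exl => /andP[yl _]; rewrite ltnNge ltnW in yl.
have := order_path_min ltn_trans ps; move/allP => /(_ j js) yj.
by move: Hjl; rewrite exl => /andP[xj _]; move: (ltn_trans xy yj); rewrite ltnNge ltnW.
Qed.

End Comb.

Section Split.
Variable R : realType.
Local Notation P := (R * R)%type.
Variable V : finType.
Variable phi : V -> set P.
Variable Rg : set P.

Lemma restr_sub (x : split_vertex phi Rg) : restr_rep phi Rg x `<=` phi (sval x).1 `&` Rg.
Proof.
case: x => [[v C]] /= Hc y; rewrite /restr_rep /= => Cy.
by case: Hc => x0 [_ eC]; move: Cy; rewrite eC => -[_ [Hy _]].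
Qed.

Lemma restr_rchain (s : seq (split_vertex phi Rg)) : adj_chain (restr_rep phi Rg) s ->
  rchain phi (map (fun x => (sval x).1) s).
Proof.
elim: s => [|x s IH] //=; case: s IH => [|y s] IH //= [[xy [z [xz yz]]] H].
split; last exact: IH.
have [e|ne] := eqVneq (sval x).1 (sval y).1; first by right.
left; split; first exact/eqP.
exists z; split; [exact: (restr_sub xz).1|exact: (restr_sub yz).1].
Qed.
End Split.

Theorem lemma10 (R : realType) (V : finType) (phi : V -> set (R * R))
    (D : set V) (Rg : set (R * R)) (pi pi' : set (R * R)) :
  string_rep phi -> is_region phi Rg ->
  shortest_curve phi D pi -> sub_curve pi' pi -> pi' `<=` Rg ->
  shortest_curve (restr_rep phi Rg) (restr_set phi Rg D) pi'.
Proof.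
move=> Hsr _ [u [v [p [g0 [Hsp [Hc [Hu [Hv epi]]]]]]]].
move=> [g1 [ag1 [epi1 [a [b [a0 [ab [b1 epi']]]]]]]] subR.
have [ag0 [cov0 [_ ord0]]] := Hc.
have cphi : forall x, closed (phi x).
  move=> x; have [h [[ch _] ->]] := Hsr.1 x.
  by apply: img_closed ch; rewrite I01_seg; exact: seg_compact.
have segab : seg a b `<=` @I01 R.
  move=> x /andP[ax xb]; apply/andP; split; [exact: le_trans ax|exact: le_trans b1].
have cg1 : {within seg a b, continuous g1} := continuous_subspaceW segab ag1.1.
have subY : g1 @` seg a b `<=` g0 @` @I01 R.
  by rewrite -epi epi1; apply: image_subset.
have pi'pi : pi' `<=` pi by rewrite epi' epi1; apply: image_subset.
have cY : closed pi' by rewrite epi'; apply: img_closed cg1; exact: seg_compact.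
pose J := @I01 R `&` g0 @^-1` pi'.
have cJ : closed J.
  by apply: closed_pre => //; [rewrite I01_seg; exact: seg_closed| exact: ag0.1].
have Ya : pi' (g1 a) by rewrite epi'; exists a => //; apply/andP; split => //; exact: ltW.
have Yb : pi' (g1 b) by rewrite epi'; exists b => //; apply/andP; split => //; exact: ltW.
have [sa Isa esa] : exists2 s, I01 s & g0 s = g1 a.
  by have := pi'pi _ Ya; rewrite epi => -[s Is es]; exists s.
have [sb Isb esb] : exists2 s, I01 s & g0 s = g1 b.
  by have := pi'pi _ Yb; rewrite epi => -[s Is es]; exists s.
have Jsa : J sa by split => //; rewrite /preimage /= esa.
have Jsb : J sb by split => //; rewrite /preimage /= esb.
have lbJ : has_lbound J by exists 0 => x [/andP[]].
have ubJ : has_ubound J by exists 1 => x [/andP[]].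
have [a' [Ja' Ha']] := closed_min _ cJ (ex_intro _ sa Jsa) lbJ.
have [b' [Jb' Hb']] := closed_max _ cJ (ex_intro _ sa Jsa) ubJ.
have sab : sa != sb.
  apply/eqP => e; have : g1 a = g1 b by rewrite -esa -esb e.
  move/(ag1.2 a b) => /(_ (segab a _) (segab b _)) eab.
  have : a = b by apply: eab; apply/andP; split => //; apply: ltW.
  by move=> e2; rewrite e2 ltxx in ab.
have a'b' : a' < b'.
  rewrite lt_neqAle (le_trans (Ha' _ Jsa) (Hb' _ Jsa)) andbT.
  apply/eqP => e; move/eqP: sab; apply.
  have e1 : sa = a' by apply/eqP; rewrite eq_le Ha' // andbT e Hb'.
  have e2 : sb = a' by apply/eqP; rewrite eq_le Ha' // andbT e Hb'.
  by rewrite e1 e2.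
have Ia' : I01 a' := Ja'.1.
have Ib' : I01 b' := Jb'.1.
have seg01 : seg a' b' `<=` @I01 R.
  move=> x /andP[ax xb]; case/andP: Ia' => a'0 _; case/andP: Ib' => _ b'1.
  by apply/andP; split; [exact: le_trans ax|exact: le_trans b'1].
have Jconv : forall t, seg a' b' t -> J t.
  move=> t Ht; split; first exact: seg01.
  rewrite /preimage /= epi'; case/andP: Ht => a't tb'.
  apply: (@conv_pre R g0 g1 a b a' b' t) => //; first by apply/andP.
    by rewrite -epi'; exact: Ja'.2.
  by rewrite -epi'; exact: Jb'.2.
have Jseg : forall t, J t -> seg a' b' t by move=> t Jt; apply/andP; split; [exact: Ha'|exact: Hb'].
have epi'' : pi' = g0 @` seg a' b'.
  apply/seteqP; split => y.
    move=> Yy; have := pi'pi _ Yy; rewrite epi => -[s Is es].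
    by exists s => //; apply: Jseg; split => //; rewrite /preimage /= es.
  by case=> s Hs <-; exact: (Jconv s Hs).2.
pose g' := fun r => g0 (aff a' b' r).
have ag' : arc_param g' by apply: arc_param_aff => //; rewrite lt_eqF.
have img' : g' @` @I01 R = pi' by rewrite epi'' aff_img.

have covi : forall s, I01 s -> exists2 j, (j < size p)%N & phi (nth u p j) (g0 s).
  move=> s Is; have [x [xp px]] := cov0 s Is.
  have xp' : x \in p by apply/In_mem.
  by exists (index x p); [rewrite index_mem|rewrite nth_index].
have uniqp : uniq p by apply/NoDup_uniq; exact: Hsp.1.2.
pose T j := seg a' b' `&` g0 @^-1` phi (nth u p j).
have cT : forall j, closed (T j).
  move=> j; apply: closed_pre; [exact: seg_closed| |exact: cphi].
  exact: continuous_subspaceW seg01 ag0.1.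
have Tconv : forall j s tau sg, (j < size p)%N -> T j s -> T j sg -> s <= tau <= sg -> T j tau.
  move=> j s tau sg jp [Hs Ps] [Hsg Psg] /andP[stau tausg].
  have Htau : seg a' b' tau.
    case/andP: Hs => a's _; case/andP: Hsg => _ sgb'.
    by apply/andP; split; [exact: le_trans stau|exact: le_trans sgb'].
  have [l lp Pl] := covi tau (seg01 _ Htau).
  split => //; case: (ltngtP l j) => [lj|jl|<-//].
  - have e : tau = s.
      apply/eqP; rewrite eq_le stau andbT.
      by apply: (ord0 l j tau s) => //; exact: seg01.
    by rewrite /preimage /= e.
  - have e : tau = sg.
      apply/eqP; rewrite eq_le tausg /=.
      by apply: (ord0 j l sg tau) => //; exact: seg01.
    by rewrite /preimage /= e.
pose S := [seq j <- iota 0 (size p) | `[< T j !=set0 >]].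
have memS : forall j, j \in S <-> (j < size p)%N /\ T j !=set0.
  move=> j; rewrite mem_filter mem_iota leq0n add0n /=; split.
    by case/andP => /asboolP H jp; split.
  by case=> jp H; apply/andP; split; [apply/asboolP|].
have sortS : sorted ltn S.
  by apply: sorted_filter; [exact: ltn_trans| exact: iota_ltn_sorted].
have uniqS : uniq S by apply: filter_uniq; exact: iota_uniq.
have [j0 j0p Pj0] := covi a' Ia'.
have Ta'seg : seg a' b' a' by apply/andP; split => //; exact: ltW.
have Tb'seg : seg a' b' b' by apply/andP; split => //; exact: ltW.
have j0S : j0 \in S by apply/memS; split => //; exists a'; split.
case ES : S j0S => [|i0 S'] // _.
have psort : path ltn i0 S' by move: sortS; rewrite ES.
pose k0 := last i0 S'.
have minS : forall j, j \in S -> (i0 <= j)%N by rewrite ES; apply: sorted_head_min.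
have maxS : forall j, j \in S -> (j <= k0)%N by rewrite ES; apply: sorted_last_max.
have i0S : i0 \in S by rewrite ES mem_head.
have k0S : k0 \in S by rewrite ES /k0 mem_last.
have [i0p Ti0] := (memS i0).1 i0S.
have [k0p Tk0] := (memS k0).1 k0S.

pose pt j := xget 0 (T j).
have Tpt : forall j, T j !=set0 -> T j (pt j) by move=> j [x Tx]; apply: xgetI Tx.
pose C j := [set y | arc_rel (phi (nth u p j) `&` Rg) (g0 (pt j)) y].
have TRg : forall j s, T j s -> (phi (nth u p j) `&` Rg) (g0 s).
  by move=> j s [Hs Ps]; split => //; apply: subR; rewrite epi''; exists s.
have arcC : forall j, T j !=set0 -> arc_component (phi (nth u p j) `&` Rg) (C j).
  by move=> j Hj; exists (g0 (pt j)); split => //; exact: TRg (Tpt j Hj).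
have CT : forall j s, (j < size p)%N -> T j !=set0 -> T j s -> C j (g0 s).
  move=> j s jp Hj Ts; have Tp := Tpt j Hj.
  split; first exact: TRg Tp.
  split; first exact: TRg Ts.
  have [e|ne] := eqVneq (pt j) s; first by left; rewrite e.
  right; exists (fun r => g0 (aff (pt j) s r)); split.
    by apply: arc_param_aff => //; [exact: seg01 Tp.1| exact: seg01 Ts.1].
  split; first by rewrite aff0.
  split; first by rewrite aff1.
  move=> y [r Ir <-]; apply: TRg.
  have [H1 H2] := aff_between (pt j) s r Ir.
  have [ps|sp] := leP (pt j) s.
    exact: (Tconv j (pt j) _ s jp Tp Ts (H1 ps)).
  exact: (Tconv j s _ (pt j) jp Ts Tp (H2 (ltW sp))).
have Csub : forall j y, C j y -> (phi (nth u p j) `&` Rg) y by move=> j y [_ [H _]].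
pose dflt : split_vertex phi Rg :=
  exist (fun vc : V * set (R * R) => arc_component (phi vc.1 `&` Rg) vc.2)
    (nth u p i0, C i0) (arcC i0 Ti0).
pose sp j : split_vertex phi Rg :=
  match pselect (T j !=set0) with
  | left H => exist (fun vc : V * set (R * R) => arc_component (phi vc.1 `&` Rg) vc.2)
                (nth u p j, C j) (arcC j H)
  | right _ => dflt
  end.
have spC : forall j, T j !=set0 ->
    restr_rep phi Rg (sp j) = C j /\ (sval (sp j)).1 = nth u p j.
  by move=> j Hj; rewrite /sp; case: pselect => [H|/(_ Hj)].
have adjS : forall j j', j \in S -> j' \in S -> (j < j')%N ->
    (forall l, (j < l < j')%N -> l \notin S) ->
    adj (restr_rep phi Rg) (sp j) (sp j').
  move=> j j' jS j'S jj' Hl.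
  have [jp Tj] := (memS j).1 jS.
  have [j'p Tj'] := (memS j').1 j'S.
  have [Cj ej] := spC j Tj; have [Cj' ej'] := spC j' Tj'.
  have [m [Tm Hm]] := closed_max _ (cT j) Tj (ex_intro _ b' (fun x (Tx : T j x) => (andP Tx.1).2)).
  have [m' [Tm' Hm']] := closed_min _ (cT j') Tj' (ex_intro _ a' (fun x (Tx : T j' x) => (andP Tx.1).1)).
  have mm' : m <= m'.
    by apply: (ord0 j j' m m' jj' j'p (seg01 _ Tm.1) (seg01 _ Tm'.1) Tm.2 Tm'.2).
  have em : m = m'.
    apply/eqP; rewrite eq_le mm' /= leNgt; apply/negP => lt.
    pose tau := (m + m') / 2.
    have mt : m < tau by rewrite /tau; lra.
    have tm : tau < m' by rewrite /tau; lra.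
    have Htau : seg a' b' tau.
      case/andP: Tm.1 => a'm _; case/andP: Tm'.1 => _ m'b'.
      apply/andP; split; [apply: le_trans a'm _; exact: ltW|apply: le_trans m'b'; exact: ltW].
    have Itau := seg01 _ Htau.
    have [l lp Pl] := covi tau Itau.
    have Tl : T l tau by split.
    have [lj|jl|elj] := ltngtP l j.
    - have := ord0 l j tau m lj jp Itau (seg01 _ Tm.1) Pl Tm.2.
      by rewrite leNgt mt.
    - have [lj'|j'l|elj'] := ltngtP l j'.
      + have := Hl l; rewrite jl lj' => /(_ isT).
        by have -> : l \in S by apply/memS; split => //; exists tau.
      + have := ord0 j' l m' tau j'l lp (seg01 _ Tm'.1) Itau Tm'.2 Pl.
        by rewrite leNgt tm.
      + by move: (Hm' tau); rewrite -elj' => /(_ Tl); rewrite leNgt tm.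
    - by move: (Hm tau); rewrite -elj => /(_ Tl); rewrite leNgt mt.
  split.
    move=> e; have : nth u p j = nth u p j' by rewrite -ej -ej' e.
    move/eqP; rewrite nth_uniq // => /eqP ejj; by rewrite ejj ltnn in jj'.
  exists (g0 m); rewrite Cj Cj'; split; first exact: CT.
  by rewrite em; exact: CT.
have chainS : adj_chain (restr_rep phi Rg) (map sp S) by apply: chain_map.

have Ta' : T i0 a'.
  have [j jp Pj] := covi a' Ia'.
  have jS : j \in S by apply/memS; split => //; exists a'; split.
  have := minS j jS; rewrite leq_eqVlt => /orP[/eqP ej|ij]; first by rewrite ej; split.
  have [sg Tsg] := Ti0.
  have e : sg = a'.
    apply/eqP; rewrite eq_le (andP Tsg.1).1 andbT.
    exact: (ord0 i0 j sg a' ij jp (seg01 _ Tsg.1) Ia' Tsg.2 Pj).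
  by rewrite -e.
have Tb' : T k0 b'.
  have [j jp Pj] := covi b' Ib'.
  have jS : j \in S by apply/memS; split => //; exists b'; split.
  have := maxS j jS; rewrite leq_eqVlt => /orP[/eqP ej|jk]; first by rewrite -ej; split.
  have [sg Tsg] := Tk0.
  have e : sg = b'.
    apply/eqP; rewrite eq_le (andP Tsg.1).2 /=.
    exact: (ord0 j k0 b' sg jk k0p Ib' (seg01 _ Tsg.1) Pj Tsg.2).
  by rewrite -e.
exists (sp i0), (sp k0), (map sp S), g'.
split; last split; last split; last split.
-
  split; first split.
  + exists (map sp S'); rewrite ES /=; split => //; split; first by rewrite last_map.
    by split => //; move: chainS; rewrite ES.
  + apply: (@List.NoDup_map_inv _ _ (fun x : split_vertex phi Rg => (sval x).1)); rewrite List_mapE.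
    have -> : map (fun x : split_vertex phi Rg => (sval x).1) (map sp S) = map (nth u p) S.
      rewrite -map_comp; apply/eq_in_map => j jS /=.
      by have [_ Tj] := (memS j).1 jS; rewrite (spC j Tj).2.
    apply/NoDup_uniq; rewrite map_inj_in_uniq // => i j iS jS /eqP.
    have [ip _] := (memS i).1 iS; have [jp _] := (memS j).1 jS.
    by rewrite nth_uniq // => /eqP.
  move=> q [q' [eq [lq [cq Wq]]]].
  pose f := fun x : split_vertex phi Rg => (sval x).1.
  have rq : rchain phi (f (sp i0) :: map f q') by have := restr_rchain cq; rewrite eq.
  pose W := [set z | List.In z p \/ D z].
  have Wm : forall z, List.In z (f (sp i0) :: map f q') -> W z.
    move=> z; rewrite -/(map f (sp i0 :: q')) -eq => /In_mapP [x [<- Hx]].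
    case: (Wq x Hx) => [Hp'|HD]; [left|right; exact: HD].
    move: Hp' => /In_mapP [j [<- /In_mem jS]].
    have [jp Tj] := (memS j).1 jS.
    rewrite /f (spC j Tj).2; apply/In_mem; exact: mem_nth.
  have [t [Wt st]] := rchain_walk rq Wm.
  have ef1 : last (f (sp i0)) (map f q') = nth u p k0 by rewrite last_map lq /f (spC k0 Tk0).2.
  have ef0 : f (sp i0) = nth u p i0 by rewrite /f (spC i0 Ti0).2.
  rewrite ef1 ef0 in Wt.
  have Wp : walk phi W u v p.
    case: Hsp.1.1 => [p0 [e [l [c _]]]]; exists p0; split => //; split => //; split => // z Hz; by left.
  have i0k0 : (i0 <= k0)%N := minS k0 k0S.
  have := Hsp.2 _ (walk_splice Wp i0k0 k0p Wt).
  rewrite !size_cat size_takel ?size_drop; last exact: ltnW (leq_ltn_trans i0k0 k0p).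
  move=> Hsz.
  have sS : (size S <= size (iota i0 (k0.+1 - i0)))%N.
    apply: uniq_leq_size uniqS _ => j jS; rewrite mem_iota; apply/andP; split; first exact: minS.
    rewrite subnKC; first by rewrite ltnS; exact: maxS.
    exact: leqW.
  rewrite size_iota in sS.
  have sq : size q = (size q').+1 by rewrite eq.
  rewrite /= size_map in st.
  rewrite size_map; lia.
-
  split; first exact: ag'.
  split.
    move=> s Is.
    have Hs : seg a' b' (aff a' b' s) by apply: (aff_between a' b' s Is).1; exact: ltW.
    have [j jp Pj] := covi _ (seg01 _ Hs).
    have Tj : T j (aff a' b' s) by split.
    have Tjn : T j !=set0 by exists (aff a' b' s).
    have jS : j \in S by apply/memS.
    exists (sp j); split; first by apply: In_map_in; apply/In_mem.
    by rewrite (spC j Tjn).1; apply: CT.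
  split.
    move=> xx /In_mapP [j [<- /In_mem jS]].
    have [jp Tj] := (memS j).1 jS.
    rewrite (spC j Tj).1.
    have -> : g' @` @I01 R `&` C j = g0 @` T j.
      apply/seteqP; split => y.
        move=> [Yy Cy]; move: Yy; rewrite img' epi'' => -[sg Hsg esg].
        by exists sg => //; split => //; rewrite /preimage /= esg; exact: (Csub j y Cy).1.
      move=> [sg Tsg <-]; split; last exact: CT.
      by rewrite img' epi''; exists sg => //; exact: Tsg.1.
    apply: connected_continuous_connected.
      apply/connected_intervalP => x y Tx Ty z xzy; exact: (Tconv j x z y jp Tx Ty xzy).
    by apply: continuous_subspaceW ag0.1 => z Tz; exact: seg01 _ Tz.1.
  move=> i j s t ij; rewrite size_map => jsz Is It.
  have isz : (i < size S)%N by apply: ltn_trans jsz.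
  rewrite (nth_map 0) // (nth_map 0) //.
  have [ip Ti] := (memS _).1 (mem_nth 0 isz).
  have [jp Tj] := (memS _).1 (mem_nth 0 jsz).
  rewrite (spC _ Ti).1 (spC _ Tj).1 => Ci Cj.
  have lt : (nth 0 S i < nth 0 S j)%N.
    by apply: (sorted_ltn_nth ltn_trans 0 sortS) => //; rewrite inE.
  apply: (aff_mono _ _ _ _ a'b').
  apply: (ord0 _ _ _ _ lt jp (aff_I01 _ _ _ Ia' Ib' Is) (aff_I01 _ _ _ Ia' Ib' It)).
    exact: (Csub _ _ Ci).1.
  exact: (Csub _ _ Cj).1.
- by rewrite (spC i0 Ti0).1 /g' aff0; exact: CT.
- by rewrite (spC k0 Tk0).1 /g' aff1; exact: CT.
- by rewrite img'.
Qed.
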